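(* Let $G=(V,E)$ be a finite simple graph. A measurement schedule on $|G\rangle$ is optimal if it is given by a path decomposition of $G$ of minimal width; in particular, $\operatorname{sc}(|G\rangle)=\operatorname{pw}(G)+1$.
   Context: The graph state of $G$ is $|G\rangle=\left(\prod_{e\in E} CZ_e\right)|+\rangle^{\otimes V}$, with one qubit per vertex. A measurement schedule on $|G\rangle$ is represented by a sequence $(X_i)_{i=1}^n$ of subsets of $V$, where $X_i$ is the set of active qubits (initialised but not yet measured) at step $i$, satisfying: (M1) each qubit is initialised exactly once (every $v\in V$ lies in some $X_i$, and the indices $i$ with $v\in X_i$ form a contiguous block, after which $v$ is measured); (M2) a qubit is measured only after all its neighbours have been initialised (if $j$ is the last index with $v\in X_j$, every neighbour of $v$ lies in some $X_i$ with $i\le j$). The cost of a measurement schedule is $\max_i |X_i|$; the spatial cost $\operatorname{sc}(|G\rangle)$ is the minimum cost over all measurement schedules on $|G\rangle$, and a schedule is optimal if its cost equals the spatial cost. A path decomposition of $G$ is a sequence $(X_i)_{i=1}^n$ of subsets of $V$ such that (P1) every vertex lies in some $X_i$, (P2) every edge is contained in some $X_i$, (P3) for $i\le j\le k$, $v\in X_i\cap X_k$ implies $v\in X_j$. Its width is $\max_i|X_i|-1$, and the pathwidth $\operatorname{pw}(G)$ is the minimum width over all path decompositions of $G$. *)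

(* Defs.v *)
(* A finite simple graph is a symmetric irreflexive
   relation e on a finType T (vertex set V = T). *)
From mathcomp Require Import all_boot all_order all_algebra.
From Stdlib Require Import ClassicalEpsilon.
Set Implicit Arguments. Unset Strict Implicit. Unset Printing Implicit Defensive.

Section Graphs.
Variables (T : finType) (e : rel T).

(* the i-th set X_(i+1) of a sequence (indices 0 .. size s - 1) *)
Definition bag (s : seq {set T}) (i : nat) : {set T} := nth set0 s i.

Definition contiguous (s : seq {set T}) : Prop :=
  forall v i j k, i <= j -> j <= k -> k < size s ->
    v \in bag s i -> v \in bag s k -> v \in bag s j.

Definition measurement_schedule (s : seq {set T}) : Prop :=
  (forall v, exists2 i, i < size s & v \in bag s i) /\
  contiguous s /\
  (forall v j, j < size s -> v \in bag s j ->
     (forall j', j < j' -> j' < size s -> v \notin bag s j') ->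
     forall u, e v u -> exists2 i, i <= j & u \in bag s i).

Definition path_decomposition (s : seq {set T}) : Prop :=
  (forall v, exists2 i, i < size s & v \in bag s i) /\
  (forall u v, e u v -> exists i, [/\ i < size s, u \in bag s i & v \in bag s i]) /\
  contiguous s.

Definition cost (s : seq {set T}) : nat := \max_(X <- s) #|X|.

(* width = max_i |X_i| - 1, as an integer (it is -1 for an all-empty sequence) *)
Definition width (s : seq {set T}) : int := ((cost s)%:Z - 1)%R.

Definition sc_pred (n : nat) : bool :=
  if excluded_middle_informative
       (exists s, measurement_schedule s /\ cost s = n) then true else false.

Definition pw_pred (n : nat) : bool :=
  if excluded_middle_informative
       (exists s, path_decomposition s /\ cost s = n) then true else false.

Lemma setT_schedule : measurement_schedule [:: setT].
Proof.
split; [|split].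
- by move=> v; exists 0 => //; rewrite /bag /= in_setT.
- move=> v i j k hij hjk; rewrite ltnS leqn0 => /eqP k0.
  by subst k; move: hjk; rewrite leqn0 => /eqP ->.
- move=> v j hj _ _ u _; exists 0 => //; by rewrite /bag /= in_setT.
Qed.

Lemma setT_pathdec : path_decomposition [:: setT].
Proof.
split; [|split].
- by move=> v; exists 0 => //; rewrite /bag /= in_setT.
- by move=> u v _; exists 0; rewrite /bag /= !in_setT.
- move=> v i j k hij hjk; rewrite ltnS leqn0 => /eqP k0.
  by subst k; move: hjk; rewrite leqn0 => /eqP ->.
Qed.

Lemma sc_ex : exists n, sc_pred n.
Proof.
exists (cost [:: setT]); rewrite /sc_pred.
case: excluded_middle_informative => // H; exfalso; apply: H.
by exists [:: setT]; split => //; exact: setT_schedule.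
Qed.

Lemma pw_ex : exists n, pw_pred n.
Proof.
exists (cost [:: setT]); rewrite /pw_pred.
case: excluded_middle_informative => // H; exfalso; apply: H.
by exists [:: setT]; split => //; exact: setT_pathdec.
Qed.

Definition sc : nat := ex_minn sc_ex.

Definition pw : int := ((ex_minn pw_ex)%:Z - 1)%R.

Definition optimal_schedule (s : seq {set T}) : Prop :=
  measurement_schedule s /\ cost s = sc.

End Graphs.

(* Main.v *)
Require Import Defs.
From mathcomp Require Import all_boot all_order all_algebra.
From Stdlib Require Import ClassicalEpsilon.
Import GRing.Theory Num.Theory.
Local Open Scope ring_scope.

Lemma last_idx (T : finType) (s : seq {set T}) v :
  (exists2 i, (i < size s)%N & v \in bag s i) ->
  exists j, [/\ (j < size s)%N, v \in bag s j &
    forall j', (j < j')%N -> (j' < size s)%N -> v \notin bag s j'].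
Proof.
move=> [i hi hv].
have ex : exists n, (n < size s)%N && (v \in bag s n) by exists i; rewrite hi hv.
have bd : forall n, (n < size s)%N && (v \in bag s n) -> (n <= size s)%N.
  by move=> n /andP[/ltnW].
case: (ex_maxnP ex bd) => j /andP[hj hvj] hmax.
exists j; split => // j' hjj' hj'; apply/negP => hv'.
by have := hmax j' (introT andP (conj hj' hv')); rewrite leqNgt hjj'.
Qed.

Lemma pd_ms (T : finType) (e : rel T) s :
  path_decomposition e s -> measurement_schedule e s.
Proof.
move=> [h1 [h2 h3]]; split => //; split => //.
move=> v j hj hv hlast u evu.
case: (h2 _ _ evu) => i [hi hvi hui].
exists i => //; rewrite leqNgt; apply/negP => hji.
by move: (hlast i hji hi); rewrite hvi.
Qed.

Lemma ms_pd (T : finType) (e : rel T) (e_sym : symmetric e) s :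
  measurement_schedule e s -> path_decomposition e s.
Proof.
move=> [h1 [h3 h2]]; split => //; split => //.
move=> u v euv.
case: (@last_idx _ _ _ (h1 u)) => ju [hju hu hlu].
case: (@last_idx _ _ _ (h1 v)) => jv [hjv hv hlv].
case: (leqP ju jv) => hle.
- case: (h2 u ju hju hu hlu v euv) => i hi hvi.
  exists ju; split => //; exact: (h3 v i ju jv).
- have evu : e v u by rewrite e_sym.
  case: (h2 v jv hjv hv hlv u evu) => i hi hui.
  exists jv; split => //; exact: (h3 u i jv ju _ (ltnW hle)).
Qed.

Theorem corollary1 (T : finType) (e : rel T)
    (e_sym : symmetric e) (e_irr : irreflexive e) :
  (forall s : seq {set T}, path_decomposition e s -> width s = pw e ->
     optimal_schedule e s) /\
  (sc e)%:Z = pw e + 1.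
Proof.
have eqp : sc_pred e =1 pw_pred e.
  move=> n; rewrite /sc_pred /pw_pred.
  case: excluded_middle_informative => H1; case: excluded_middle_informative => H2 //.
  - exfalso; apply: H2; case: H1 => s [hs hc]; exists s; split => //; exact: ms_pd.
  - exfalso; apply: H1; case: H2 => s [hs hc]; exists s; split => //; exact: pd_ms.
have scE : sc e = ex_minn (pw_ex e) by rewrite /sc; apply: eq_ex_minn.
split.
- move=> s hs hw; split; first exact: pd_ms.
  move: hw; rewrite /width /pw scE => /eqP; rewrite (inj_eq (addIr _)) => /eqP [] //.
- by rewrite scE /pw subrK.
Qed.
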